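(* Let $a, b \ge 2$ be integers and let $R_{a,b} = \{C_{i,j} : 1 \le i \le a,\ 1 \le j \le b\}$ be the rectangular polyomino of size $n = ab$. Then on the $ab \times ab$ board, $$\mathrm{cp}_{\mathrm{fixed}}(R_{a,b}) = \left\lceil \frac{ab-a+1}{2a-1} \right\rceil \left\lceil \frac{ab-b+1}{2b-1} \right\rceil.$$
   Context: For integers $i,j$, $C_{i,j}$ denotes the unit square cell in column $i$ and row $j$ of the integer grid (columns numbered left to right, rows numbered top to bottom). A polyomino is a finite set of cells; its size is its number of cells. For a polyomino $\mathcal{P}$ of size $n$ the board is $\mathbb{B} = \{C_{i,j} : 1 \le i,j \le n\}$. The shift of $\mathcal{P}$ by integers $(c,d)$ is $\mathcal{P}+(c,d) = \{C_{x+c,y+d} : C_{x,y} \in \mathcal{P}\}$; a fixed copy of $\mathcal{P}$ is any shift of $\mathcal{P}$ (no rotations). A set of polyominoes is a valid arrangement if each is contained in $\mathbb{B}$ and they are pairwise disjoint. A fixed packing of $\mathcal{P}$ is a set of fixed copies of $\mathcal{P}$ forming a valid arrangement such that adding any further fixed copy of $\mathcal{P}$ yields an invalid arrangement. The clumsy fixed packing number $\mathrm{cp}_{\mathrm{fixed}}(\mathcal{P})$ is the minimum number of polyominoes in a fixed packing of $\mathcal{P}$ on the $n \times n$ board. *)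

(* Defs.v *)
From mathcomp Require Import all_boot all_order all_algebra.
From mathcomp Require Import finmap.
Set Implicit Arguments. Unset Strict Implicit. Unset Printing Implicit Defensive.
Import GRing.Theory Num.Theory.
Local Open Scope fset_scope.

(* A cell C_{i,j} is represented by the pair (i, j) : column i, row j. *)
Definition cell := (int * int)%type.

Definition polyomino := {fset cell}.

Definition psize (P : polyomino) : nat := #|` P|.

Definition in_board (n : nat) (c : cell) : bool :=
  ((1 <= c.1)%R && (c.1 <= n%:Z)%R) && ((1 <= c.2)%R && (c.2 <= n%:Z)%R).

Definition shift (P : polyomino) (c d : int) : polyomino :=
  [fset ((x.1 + c)%R, (x.2 + d)%R) | x in P].

Definition fixed_copy (P Q : polyomino) : Prop :=
  exists c d : int, Q = shift P c d.

Definition valid_arrangement (n : nat) (S : {fset polyomino}) : Prop :=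
  (forall Q, Q \in S -> forall x, x \in Q -> in_board n x) /\
  (forall Q1 Q2, Q1 \in S -> Q2 \in S -> Q1 != Q2 -> [disjoint Q1 & Q2]).

Definition fixed_packing (P : polyomino) (S : {fset polyomino}) : Prop :=
  (forall Q, Q \in S -> fixed_copy P Q) /\
  valid_arrangement (psize P) S /\
  (forall Q, fixed_copy P Q -> Q \notin S ->
     ~ valid_arrangement (psize P) (Q |` S)).

Definition is_cp_fixed (P : polyomino) (m : nat) : Prop :=
  (exists S, fixed_packing P S /\ #|` S| = m) /\
  (forall S, fixed_packing P S -> m <= #|` S|).

Definition rect (a b : nat) : polyomino :=
  [fset x | x in [seq ((i%:Z)%R, (j%:Z)%R) | i <- iota 1 a, j <- iota 1 b]].

Definition ceil_div (x y : nat) : nat := (x + y - 1) %/ y.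

(* Main.v *)
Require Import Defs.
From mathcomp Require Import all_boot all_order all_algebra.
From mathcomp Require Import finmap.
From mathcomp Require Import zify.
Import GRing.Theory Num.Theory.
Local Open Scope fset_scope.

Lemma mem_rect a b (x : cell) :
  (x \in rect a b) = [&& (1 <= x.1)%R, (x.1 <= a%:Z)%R, (1 <= x.2)%R & (x.2 <= b%:Z)%R].
Proof.
rewrite /rect in_fset /=; apply/allpairsP/idP.
  case=> [[i j]] /= [hi hj ->] /=; rewrite !mem_iota in hi hj; lia.
case: x => x1 x2 /= h; exists (`|x1|%N, `|x2|%N); rewrite /= !mem_iota.
split; try lia. congr pair; lia.
Qed.

Lemma mem_shift a b (c d : int) (x : cell) :
  (x \in shift (rect a b) c d) =
  [&& (c < x.1)%R, (x.1 <= c + a%:Z)%R, (d < x.2)%R & (x.2 <= d + b%:Z)%R].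
Proof.
rewrite /shift; apply/imfsetP/idP.
  case=> y /=; rewrite mem_rect => h ->/=; lia.
case: x => x1 x2 /= h; exists (x1 - c, x2 - d)%R; rewrite /= ?mem_rect /=.
  lia.
congr pair; lia.
Qed.

Lemma card_uniq_fset (T : choiceType) (s : seq T) : uniq s -> #|` [fset x | x in s]| = size s.
Proof.
move=> us; apply/eqP; rewrite eqn_leq; apply/andP; split.
  apply: uniq_leq_size; first exact: fset_uniq.
  by move=> x; rewrite in_fset.
apply: uniq_leq_size => // x; by rewrite in_fset.
Qed.

Lemma psize_rect a b : psize (rect a b) = (a * b)%N.
Proof.
rewrite /psize /rect card_uniq_fset ?size_allpairs ?size_iota //.
apply: allpairs_uniq; try exact: iota_uniq.
by move=> [i j] [i' j'] _ _ /= [] -> ->.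
Qed.

Lemma shift_inj a b (c d c' d' : int) : (0 < a)%N -> (0 < b)%N ->
  shift (rect a b) c d = shift (rect a b) c' d' -> c = c' /\ d = d'.
Proof.
move=> ha hb e.
have h1 : ((c + 1)%R, (d + 1)%R) \in shift (rect a b) c' d'.
  by rewrite -e mem_shift /=; lia.
have h2 : ((c' + 1)%R, (d' + 1)%R) \in shift (rect a b) c d.
  by rewrite e mem_shift /=; lia.
move: h1 h2; rewrite !mem_shift /=; lia.
Qed.

Lemma shift_meet a b (c d c' d' : int) :
  (c' - a%:Z < c)%R -> (c < c' + a%:Z)%R -> (d' - b%:Z < d)%R -> (d < d' + b%:Z)%R ->
  ~~ fdisjoint (shift (rect a b) c d) (shift (rect a b) c' d').
Proof.
move=> h1 h2 h3 h4; apply/negP => /fdisjointP H.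
have [x1 hx1] : exists x1 : int, [&& (c < x1)%R, (x1 <= c + a%:Z)%R, (c' < x1)%R & (x1 <= c' + a%:Z)%R].
  case: (lerP c c') => h; [exists (c' + 1)%R | exists (c + 1)%R]; lia.
have [x2 hx2] : exists x2 : int, [&& (d < x2)%R, (x2 <= d + b%:Z)%R, (d' < x2)%R & (x2 <= d' + b%:Z)%R].
  case: (lerP d d') => h; [exists (d' + 1)%R | exists (d + 1)%R]; lia.
have := H (x1, x2); rewrite !mem_shift /=.
move=> /(_ ltac:(lia)) /negP; apply; lia.
Qed.

Lemma shift_sep a b (c d c' d' : int) :
  ((c + a%:Z <= c')%R \/ (c' + a%:Z <= c)%R \/ (d + b%:Z <= d')%R \/ (d' + b%:Z <= d)%R) ->
  fdisjoint (shift (rect a b) c d) (shift (rect a b) c' d').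
Proof.
move=> h; apply/fdisjointP => x; rewrite !mem_shift => hx; apply/negP; lia.
Qed.

Lemma shift_meet_inv a b (c d c' d' : int) x :
  x \in shift (rect a b) c d -> x \in shift (rect a b) c' d' ->
  [/\ (c' - a%:Z < c)%R, (c < c' + a%:Z)%R, (d' - b%:Z < d)%R & (d < d' + b%:Z)%R].
Proof. rewrite !mem_shift => h1 h2; split; lia. Qed.

Lemma in_boardE n (x : cell) : in_board n x = [&& (Posz 1 <= x.1)%R, (x.1 <= n%:Z)%R, (Posz 1 <= x.2)%R & (x.2 <= n%:Z)%R].
Proof. by rewrite /in_board -!andbA. Qed.

Lemma shift_board a b n (c d : int) :
  (0 < a)%N -> (0 < b)%N ->
  (forall x, x \in shift (rect a b) c d -> in_board n x) <->
  [/\ (0%:Z <= c)%R, (c <= n%:Z - a%:Z)%R, (0%:Z <= d)%R & (d <= n%:Z - b%:Z)%R].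
Proof.
move=> ha hb; split.
  move=> H.
  have := H ((c + 1)%R, (d + 1)%R); rewrite mem_shift in_boardE /= => h1.
  have := H ((c + a%:Z)%R, (d + b%:Z)%R); rewrite mem_shift in_boardE /= => h2.
  have {h1}h1 := h1 ltac:(lia). have {h2}h2 := h2 ltac:(lia).
  split; lia.
move=> [h1 h2 h3 h4] x; rewrite mem_shift in_boardE => hx; lia.
Qed.

Lemma shift_self a b (c d : int) : (0 < a)%N -> (0 < b)%N ->
  ~~ fdisjoint (shift (rect a b) c d) (shift (rect a b) c d).
Proof. move=> ha hb; apply: shift_meet; lia. Qed.

Arguments shift_meet_inv {a b c d c' d' x}.
Local Close Scope fset_scope.
Set Implicit Arguments. Unset Strict Implicit.

Definition kk L n := ceil_div (n - L + 1) (2 * L - 1).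
Definition pos L n i := minn (i * (2 * L - 1) + (L - 1)) (n - L).

Lemma kk_facts L n : 0 < L -> 2 * L <= n ->
  n - L + 1 <= kk L n * (2 * L - 1) /\ kk L n * (2 * L - 1) < n - L + 1 + (2 * L - 1).
Proof.
move=> hL hn; rewrite /kk /ceil_div.
set D := 2 * L - 1; set M := n - L + 1.
have hD : 0 < D by rewrite /D; lia.
have e := divn_eq (M + D - 1) D. have r := ltn_pmod (M + D - 1) hD.
set q := (M + D - 1) %/ D in e *.
move: e r; set r := (M + D - 1) %% D => e r'.
set qD := q * D in e *. lia.
Qed.

Lemma mulD_le i j D : i <= j -> i * D <= j * D.
Proof. by move=> h; rewrite leq_mul2r h orbT. Qed.

Lemma pos_le L n i : pos L n i <= n - L.
Proof. exact: geq_minr. Qed.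

Lemma pos_sep L n i j : 0 < L -> 2 * L <= n -> i < j -> j < kk L n ->
  pos L n i + L <= pos L n j.
Proof.
move=> hL hn hij hj; have [f1 f2] := kk_facts hL hn.
set D := 2 * L - 1 in f1 f2 *; set k := kk L n in f1 f2 hj *.
have h1 := mulD_le D hij. have h2 : j * D <= (k - 1) * D by apply: mulD_le; lia.
have h3 : (k - 1) * D = k * D - D by rewrite mulnBl mul1n.
rewrite /pos -/D mulSn in h1 *. lia.
Qed.

Lemma pos_cover L n c : 0 < L -> 2 * L <= n -> c <= n - L ->
  exists2 i, i < kk L n & (c <= pos L n i + (L - 1)) && (pos L n i <= c + (L - 1)).
Proof.
move=> hL hn hc; have [f1 f2] := kk_facts hL hn.
set D := 2 * L - 1 in f1 f2 *; set k := kk L n in f1 f2 *.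
have hD : 0 < D by rewrite /D; lia.
have e := divn_eq c D. have r := ltn_pmod c hD.
exists (c %/ D).
  have : c %/ D * D < k * D by lia.
  by rewrite ltn_mul2r => /andP [].
rewrite /pos -/D; lia.
Qed.

Lemma test_le L n i : 0 < L -> 2 * L <= n -> i < kk L n -> i * (2 * L - 1) <= n - L.
Proof.
move=> hL hn hi; have [f1 f2] := kk_facts hL hn.
set D := 2 * L - 1 in f1 f2 *; set k := kk L n in f1 f2 hi *.
have h2 : i * D <= (k - 1) * D by apply: mulD_le; lia.
have h3 : (k - 1) * D = k * D - D by rewrite mulnBl mul1n.
lia.
Qed.

Lemma test_inj L i j (c : int) : 0 < L ->
  (c - Posz L < Posz (i * (2 * L - 1)))%R -> (Posz (i * (2 * L - 1)) < c + Posz L)%R ->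
  (c - Posz L < Posz (j * (2 * L - 1)))%R -> (Posz (j * (2 * L - 1)) < c + Posz L)%R ->
  i = j.
Proof.
move=> hL h1 h2 h3 h4; set D := 2 * L - 1 in h1 h2 h3 h4.
case: (ltngtP i j) => // hij.
  have := mulD_le D hij; rewrite mulSn; lia.
have := mulD_le D hij; rewrite mulSn; lia.
Qed.

Lemma pos_board L n i : 2 * L <= n ->
  (0%:Z <= Posz (pos L n i))%R /\ (Posz (pos L n i) <= n%:Z - L%:Z)%R.
Proof. move=> hn; have := pos_le L n i; lia. Qed.

Lemma test_board L n i : 0 < L -> 2 * L <= n -> i < kk L n ->
  (0%:Z <= Posz (i * (2 * L - 1)))%R /\ (Posz (i * (2 * L - 1)) <= n%:Z - L%:Z)%R.
Proof. move=> hL hn hi; have := test_le hL hn hi; move: (i * (2 * L - 1)) => m; lia. Qed.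

Lemma pos_sepZ L n i j : 0 < L -> 2 * L <= n -> i < j -> j < kk L n ->
  (Posz (pos L n i) + Posz L <= Posz (pos L n j))%R.
Proof. move=> hL hn hij hj; have := pos_sep hL hn hij hj; lia. Qed.

Lemma pos_coverZ L n (c : int) : 0 < L -> 2 * L <= n -> (0%:Z <= c)%R -> (c <= n%:Z - L%:Z)%R ->
  exists2 i, i < kk L n & (c - Posz L < Posz (pos L n i))%R && (Posz (pos L n i) < c + Posz L)%R.
Proof.
move=> hL hn h0 h1.
have [i hi /andP [h2 h3]] := pos_cover (c := `|c|%N) hL hn ltac:(lia).
exists i => //; apply/andP; split; lia.
Qed.

Local Open Scope fset_scope.

Lemma meet_ex (A B : {fset cell}) : ~~ fdisjoint A B -> exists x, x \in A /\ x \in B.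
Proof.
rewrite /fdisjoint => /fset0Pn [x]; rewrite in_fsetI => /andP [h1 h2]; by exists x.
Qed.

Lemma iota0P i k : (i \in iota 0 k) = (i < k).
Proof. by rewrite mem_iota add0n. Qed.


Unset Implicit Arguments.
Theorem theorem2 (a b : nat) (ha : 2 <= a) (hb : 2 <= b) :
  is_cp_fixed (rect a b)
    (ceil_div (a * b - a + 1) (2 * a - 1) * ceil_div (a * b - b + 1) (2 * b - 1)).
Proof.
have ha0 : 0 < a by lia. have hb0 : 0 < b by lia.
have hna : 2 * a <= a * b by rewrite [a * b]mulnC leq_mul2r hb orbT.
have hnb : 2 * b <= a * b by rewrite leq_mul2r ha orbT.
change (is_cp_fixed (rect a b) (kk a (a * b) * kk b (a * b))).
move: hna hnb; set n := a * b => hna hnb.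
have hn : psize (rect a b) = n := psize_rect a b.
set R := rect a b.
have hDa : 0 < 2 * a - 1 by lia. have hDb : 0 < 2 * b - 1 by lia.
split.
- pose s := [seq shift R (Posz (pos a n i)) (Posz (pos b n j)) | i <- iota 0 (kk a n), j <- iota 0 (kk b n)].
  have posinj : forall L i i', 0 < L -> 2 * L <= n -> i < kk L n -> i' < kk L n ->
      pos L n i = pos L n i' -> i = i'.
    move=> L i i' hL hLn hi hi' e; case: (ltngtP i i') => // hii.
      by have := pos_sep hL hLn hii hi'; lia.
    by have := pos_sep hL hLn hii hi; lia.
  have us : uniq s.
    apply: allpairs_uniq; try exact: iota_uniq.
    move=> [i j] [i' j'] /allpairsP [[i1 j1] [hi hj /= [-> ->]]] /allpairsP [[i2 j2] [hi' hj' /= [-> ->]]].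
    rewrite !iota0P /= in hi hj hi' hj'.
    move=> /= /shift_inj [] // [e1] [e2].
    by rewrite (posinj a i1 i2 ha0 hna hi hi' e1) (posinj b j1 j2 hb0 hnb hj hj' e2).
  exists [fset x | x in s]; split; last by rewrite card_uniq_fset // size_allpairs !size_iota.
  rewrite /fixed_packing hn; split; [|split; [split|]].
  + move=> Q; rewrite in_fset => /allpairsP [[i j] [_ _ ->]]; by exists (Posz (pos a n i)), (Posz (pos b n j)).
  + move=> Q; rewrite in_fset => /allpairsP [[i j] [_ _ ->]].
    apply/shift_board => //; have [p1 p2] := pos_board i hna; have [p3 p4] := pos_board j hnb; by split.
  + move=> Q1 Q2; rewrite !in_fset => /allpairsP [[i j] [hi hj ->]] /allpairsP [[i' j'] [hi' hj' ->]] hne.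
    rewrite !iota0P /= in hi hj hi' hj'.
    apply: shift_sep.
    case: (ltngtP i i') => hii.
    * by left; apply: pos_sepZ.
    * by right; left; apply: pos_sepZ.
    case: (ltngtP j j') => hjj.
    * by right; right; left; apply: pos_sepZ.
    * by right; right; right; apply: pos_sepZ.
    by move: hne; rewrite hii hjj eqxx.
  + move=> Q [c [d ->]] hQ [hbd hds].
    have := hbd (shift R c d) ltac:(by rewrite in_fset1U eqxx) => /(shift_board a b n c d ha0 hb0) [c0 c1 d0 d1].
    have [i hi /andP [hi1 hi2]] := pos_coverZ ha0 hna c0 c1.
    have [j hj /andP [hj1 hj2]] := pos_coverZ hb0 hnb d0 d1.
    set T := shift R (Posz (pos a n i)) (Posz (pos b n j)).
    have TS : T \in [fset x | x in s].
      by rewrite in_fset; apply/allpairsP; exists (i, j); rewrite !iota0P; split.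
    have hTne : T != shift R c d.
      by apply/eqP => e; move: hQ; rewrite -e TS.
    have := hds T (shift R c d) ltac:(by rewrite in_fset1U TS orbT) ltac:(by rewrite in_fset1U eqxx) hTne.
    apply/negP; apply: shift_meet => //.
- move=> S [hcopy [[hboard hdisj] hmax]]; rewrite hn in hboard.
  pose tests := [seq (i * (2 * a - 1), j * (2 * b - 1)) | i <- iota 0 (kk a n), j <- iota 0 (kk b n)].
  pose T (t : nat * nat) := shift R (Posz t.1) (Posz t.2).
  pose P t (Q : polyomino) := ~~ fdisjoint Q (T t).
  pose g t := nth fset0 S (find (P t) S).
  have hasP : forall t, t \in tests -> has (P t) S.
    move=> t /allpairsP [[i j] [hi hj ->]]; rewrite !iota0P /= in hi hj.
    have tb : forall x, x \in T (i * (2 * a - 1), j * (2 * b - 1)) -> in_board n x.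
      apply/shift_board => //; have [p1 p2] := test_board ha0 hna hi;
        have [p3 p4] := test_board hb0 hnb hj; by split.
    apply/negPn/negP => /hasPn H.
    case: (boolP (T (i * (2 * a - 1), j * (2 * b - 1)) \in S)) => hT.
      have := H _ hT; rewrite /P negbK; apply/negP; exact: shift_self.
    apply: (hmax (T (i * (2 * a - 1), j * (2 * b - 1)))) => //.
      by rewrite /fixed_copy /T; eexists; eexists; reflexivity.
    rewrite hn; split.
      move=> Q; rewrite in_fset1U => /orP [/eqP -> | hQ]; first exact: tb.
      exact: hboard hQ.
    move=> Q1 Q2; rewrite !in_fset1U => /orP [/eqP -> | h1] /orP [/eqP -> | h2] hne.
    * by rewrite eqxx in hne.
    * by have := H _ h2; rewrite /P negbK fdisjoint_sym.
    * by have := H _ h1; rewrite /P negbK.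
    * exact: hdisj.
  have gS : forall t, t \in tests -> g t \in S /\ P t (g t).
    move=> t ht; have hh := hasP t ht; have := hh; rewrite has_find => hf.
    split; first exact: mem_nth.
    exact: (nth_find fset0 hh).
  have ginj : {in tests &, injective g}.
    move=> t t' ht ht' e.
    have [g1 p1] := gS t ht; have [g2 p2] := gS t' ht'; rewrite -e in p2.
    have [c [d hQ]] := hcopy _ g1; rewrite /P hQ in p1 p2.
    have [x [x1 x2]] := meet_ex p1; have [y [y1 y2]] := meet_ex p2.
    move: ht ht' x2 y2 => /allpairsP [[i j] [hi hj ->]] /allpairsP [[i' j'] [hi' hj' ->]] /= x2 y2.
    have [u1 u2 u3 u4] := shift_meet_inv x2 x1.
    have [v1 v2 v3 v4] := shift_meet_inv y2 y1.
    rewrite /= in u1 u2 u3 u4 v1 v2 v3 v4.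
    have ei := test_inj ha0 u1 u2 v1 v2.
    have ej := test_inj hb0 u3 u4 v3 v4.
    by rewrite ei ej.
  have utests : uniq tests.
    apply: allpairs_uniq; try exact: iota_uniq.
    move=> [i j] [i' j'] _ _ /= [] /eqP; rewrite eqn_pmul2r //.
    move=> /eqP -> /eqP; rewrite eqn_pmul2r //.
    by move=> /eqP ->.
  have : size (map g tests) <= size S.
    apply: uniq_leq_size; first by rewrite map_inj_in_uniq.
    by move=> Q /mapP [t ht ->]; case: (gS t ht).
  by rewrite size_map size_allpairs !size_iota.
Qed.
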